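(* Let $t\ge 4$ and let $K_{t,t}^{-}$ be the graph obtained from the complete bipartite graph $K_{t,t}$ by removing one edge. In a Waiter-Client game, by offering edges of $K_{t,t}^-$ only, Waiter can force a red perfect matching of $K_{t,t}^{-}$ within $t+1$ rounds.
   Context: Waiter-Client game: in each round Waiter offers two free edges of the board, Client colors one of them red and the other becomes blue. *)

(* Defs.v *)
From mathcomp Require Import all_boot all_fingroup.
Set Implicit Arguments. Unset Strict Implicit. Unset Printing Implicit Defensive.

(* Vertices of K_{t,t}: left part 'I_t and right part 'I_t.
   An edge {a_i, b_j} is encoded as the pair (i, j) : 'I_t * 'I_t.
   K_{t,t}^- is K_{t,t} with the edge (i0, j0) removed. *)
Definition Kminus_edges (t : nat) (i0 j0 : 'I_t) : {set 'I_t * 'I_t} :=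
  [set e | e != (i0, j0)].

Definition has_red_pm (t : nat) (R : {set 'I_t * 'I_t}) : Prop :=
  exists s : {perm 'I_t}, forall i, (i, s i) \in R.

(* In each round Waiter offers two distinct
   free edges of the board; Client colours one red and the other blue. *)
Fixpoint waiter_wins (t : nat) (i0 j0 : 'I_t) (k : nat)
    (R B : {set 'I_t * 'I_t}) : Prop :=
  has_red_pm R \/
  match k with
  | 0 => False
  | k'.+1 =>
      exists e1 e2 : 'I_t * 'I_t,
        [/\ e1 != e2,
            e1 \in Kminus_edges i0 j0 :\: (R :|: B),
            e2 \in Kminus_edges i0 j0 :\: (R :|: B),
            waiter_wins i0 j0 k' (e1 |: R) (e2 |: B) &
            waiter_wins i0 j0 k' (e2 |: R) (e1 |: B)]
  end.

(* Main.v *)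
Require Import Defs.
From mathcomp Require Import all_boot all_fingroup.
From mathcomp Require Import zify.
Set Implicit Arguments. Unset Strict Implicit. Unset Printing Implicit Defensive.

Record inv0 (t : nat) (a x y : 'I_t) (UL UR : {set 'I_t})
    (R B : {set 'I_t * 'I_t}) : Prop := Inv0 {
  i_card : #|UL| = #|UR|.+1;
  i_aUL : a \notin UL;
  i_xUR : x \notin UR;
  i_yUR : y \notin UR;
  i_xy : x != y;
  i_ax : (a, x) \in R;
  i_ay : (a, y) \in R;
  i_g : exists g : 'I_t -> 'I_t,
    (forall i, i \notin UL -> i != a ->
       [/\ (i, g i) \in R, g i \notin UR, g i != x & g i != y]) /\
    (forall i j, i \notin UL -> i != a -> j \notin UL -> j != a ->
       g i = g j -> i = j);
  i_free : forall l r, l \in UL -> (r \in UR) || (r == x) || (r == y) ->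
    (l, r) \notin R :|: B
}.

Lemma pm_inj t (R : {set 'I_t * 'I_t}) (f : 'I_t -> 'I_t) :
  injective f -> (forall i, (i, f i) \in R) -> has_red_pm R.
Proof. by move=> fi H; exists (perm fi) => i; rewrite permE. Qed.

Lemma ww_step t (i0 j0 : 'I_t) k R B e1 e2 :
  e1 != e2 -> e1 \in Kminus_edges i0 j0 :\: (R :|: B) ->
  e2 \in Kminus_edges i0 j0 :\: (R :|: B) ->
  waiter_wins i0 j0 k (e1 |: R) (e2 |: B) ->
  waiter_wins i0 j0 k (e2 |: R) (e1 |: B) ->
  waiter_wins i0 j0 k.+1 R B.
Proof. by move=> *; right; exists e1, e2; split. Qed.

Lemma ww0 t (i0 j0 : 'I_t) k R B : has_red_pm R -> waiter_wins i0 j0 k R B.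
Proof. by move=> H; case: k => /=; left. Qed.

Lemma final_pm t (a x y l : 'I_t) UL UR R B z w :
  inv0 a x y UL UR R B -> UL = [set l] ->
  (z == x) && (w == y) || (z == y) && (w == x) -> has_red_pm ((l, z) |: R).
Proof.
case=> _ aUL _ _ xy ax ay [g [Hg gi]] _ EUL Hzw.
have la : l != a by apply: contraNneq aUL => <-; rewrite EUL set11.
have zw : z != w.
  by case/orP: Hzw => /andP[/eqP-> /eqP->] //; rewrite eq_sym.
have Hg' : forall i, i != l -> i != a ->
    [/\ (i, g i) \in R, g i != z & g i != w].
  move=> i il ia; have iUL : i \notin UL by rewrite EUL inE.
  have [H1 _ H3 H4] := Hg i iUL ia.
  by split=> //; case/orP: Hzw => /andP[/eqP Ez /eqP Ew]; rewrite ?Ez ?Ew.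
pose f i := if i == l then z else if i == a then w else g i.
apply: (@pm_inj _ _ f).
- move=> i j; rewrite /f.
  case: (eqVneq i l) => [->|il]; case: (eqVneq j l) => [->|jl] //.
  + case: (eqVneq j a) => [->|ja]; first by move/eqP; rewrite (negbTE zw).
    by have [_ /eqP H _] := Hg' j jl ja; move=> E; rewrite E in H.
  + case: (eqVneq i a) => [->|ia].
      by move=> E; rewrite E eqxx in zw.
    by have [_ /eqP H _] := Hg' i il ia; move=> E; rewrite E in H.
  + case: (eqVneq i a) => [->|ia]; case: (eqVneq j a) => [->|ja] //.
    * by have [_ _ /eqP H] := Hg' j jl ja; move=> E; rewrite E in H.
    * by have [_ _ /eqP H] := Hg' i il ia; move=> E; rewrite E in H.
    * by apply: gi; rewrite ?EUL ?inE.
- move=> i; rewrite /f; case: (eqVneq i l) => [->|il]; first by rewrite setU11.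
  rewrite setU1r //; case: (eqVneq i a) => [->|ia].
    by case/orP: Hzw => /andP[_ /eqP->].
  by have [] := Hg' i il ia.
Qed.

Lemma step_right t (a x y : 'I_t) UL UR R B (l1 l2 r : 'I_t) :
  inv0 a x y UL UR R B -> l1 \in UL -> l2 \in UL -> r \in UR ->
  inv0 a x y (UL :\ l1) (UR :\ r) ((l1, r) |: R) ((l2, r) |: B).
Proof.
case=> card aUL xUR yUR xy ax ay [g [Hg gi]] free l1UL l2UL rUR.
have rx : r != x by apply: contraNneq xUR => <-.
have ry : r != y by apply: contraNneq yUR => <-.
split => //.
- move: card; rewrite (cardsD1 l1 UL) (cardsD1 r UR) l1UL rUR.
  by rewrite !add1n => -[].
- by rewrite !inE negb_and aUL orbT.
- by rewrite !inE (negbTE xUR) andbF.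
- by rewrite !inE (negbTE yUR) andbF.
- by rewrite setU1r.
- by rewrite setU1r.
- exists (fun i => if i == l1 then r else g i); split.
  + move=> i; rewrite !inE negb_and negbK => Hi ia.
    case: (eqVneq i l1) => [->|il] /=.
      by rewrite !eqxx rx ry; split.
    have Hi' : i \notin UL by move: Hi; rewrite (negbTE il).
    have [H1 H2 H3 H4] := Hg i Hi' ia.
    by rewrite H1 orbT (negbTE H2) andbF H3 H4; split.
  + move=> i j; rewrite !inE !negb_and !negbK => Hi ia Hj ja.
    case: (eqVneq i l1) => [->|il]; case: (eqVneq j l1) => [->|jl] //.
    * have Hj' : j \notin UL by move: Hj; rewrite (negbTE jl).
      have [_ H2 _ _] := Hg j Hj' ja.
      by move=> E; rewrite -E rUR in H2.
    * have Hi' : i \notin UL by move: Hi; rewrite (negbTE il).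
      have [_ H2 _ _] := Hg i Hi' ia.
      by move=> E; rewrite E rUR in H2.
    * have Hi' : i \notin UL by move: Hi; rewrite (negbTE il).
      have Hj' : j \notin UL by move: Hj; rewrite (negbTE jl).
      exact: gi.
- move=> l r'; rewrite !inE => /andP[ll1 lUL] Hr'.
  have r'r : r' != r.
    apply/eqP=> E; move: Hr'; rewrite E eqxx /= (negbTE rx) (negbTE ry).
    by [].
  have Hr'' : (r' \in UR) || (r' == x) || (r' == y).
    by move: Hr'; rewrite r'r.
  have := free l r' lUL Hr''; rewrite !inE => /norP[nR nB].
  by rewrite !xpair_eqE (negbTE ll1) (negbTE r'r) andbF (negbTE nR) (negbTE nB) andbF.
Qed.

Lemma step_left t (a x y : 'I_t) UL UR R B (i r1 r2 : 'I_t) :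
  inv0 a x y UL UR R B -> i \in UL -> r1 \in UR -> r2 \in UR ->
  inv0 a x y (UL :\ i) (UR :\ r1) ((i, r1) |: R) ((i, r2) |: B).
Proof.
case=> card aUL xUR yUR xy ax ay [g [Hg gi]] free iUL r1UR r2UR.
have rx : r1 != x by apply: contraNneq xUR => <-.
have ry : r1 != y by apply: contraNneq yUR => <-.
split => //.
- move: card; rewrite (cardsD1 i UL) (cardsD1 r1 UR) iUL r1UR.
  by rewrite !add1n => -[].
- by rewrite !inE negb_and aUL orbT.
- by rewrite !inE (negbTE xUR) andbF.
- by rewrite !inE (negbTE yUR) andbF.
- by rewrite setU1r.
- by rewrite setU1r.
- exists (fun k => if k == i then r1 else g k); split.
  + move=> k; rewrite !inE negb_and negbK => Hk ka.
    case: (eqVneq k i) => [->|ki] /=.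
      by rewrite !eqxx rx ry; split.
    have Hk' : k \notin UL by move: Hk; rewrite (negbTE ki).
    have [H1 H2 H3 H4] := Hg k Hk' ka.
    by rewrite H1 orbT (negbTE H2) andbF H3 H4; split.
  + move=> k j; rewrite !inE !negb_and !negbK => Hk ka Hj ja.
    case: (eqVneq k i) => [->|ki]; case: (eqVneq j i) => [->|ji] //.
    * have Hj' : j \notin UL by move: Hj; rewrite (negbTE ji).
      have [_ H2 _ _] := Hg j Hj' ja.
      by move=> E; rewrite -E r1UR in H2.
    * have Hk' : k \notin UL by move: Hk; rewrite (negbTE ki).
      have [_ H2 _ _] := Hg k Hk' ka.
      by move=> E; rewrite E r1UR in H2.
    * have Hk' : k \notin UL by move: Hk; rewrite (negbTE ki).
      have Hj' : j \notin UL by move: Hj; rewrite (negbTE ji).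
      exact: gi.
- move=> l r'; rewrite !inE => /andP[li lUL] Hr'.
  have Hr'' : (r' \in UR) || (r' == x) || (r' == y).
    by case/orP: Hr' => [/orP[/andP[_ H]|H]|H]; rewrite H ?orbT.
  have := free l r' lUL Hr''; rewrite !inE => /norP[nR nB].
  by rewrite !xpair_eqE (negbTE li) /= (negbTE nR) (negbTE nB).
Qed.

Lemma main t (i0 j0 a x y : 'I_t) n : forall (UL UR : {set 'I_t}) (R B : {set 'I_t * 'I_t}), #|UR| = n ->
  inv0 a x y UL UR R B ->
  (i0 \notin UL) || [&& j0 \notin UR, j0 != x & j0 != y] ->
  waiter_wins i0 j0 n.+1 R B.
Proof.
elim: n => [|n IH] UL UR R B cUR inv H6.
- have cUL : #|UL| == 1 by rewrite (i_card inv) cUR.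
  case/cards1P: cUL => l EUL.
  have lUL : l \in UL by rewrite EUL set11.
  have Hmem : forall z, (z == x) || (z == y) ->
      (l, z) \in Kminus_edges i0 j0 :\: (R :|: B).
    move=> z Hz; rewrite in_setD (i_free inv lUL); last by rewrite -orbA Hz orbT.
    rewrite /Kminus_edges inE xpair_eqE /=.
    case/orP: H6 => [Hi|/and3P[_ jx jy]].
      by apply: contraNN Hi => /andP[/eqP <- _].
    apply/nandP; right; apply/eqP => E.
    by case/orP: Hz => /eqP Ez; [move: jx | move: jy]; rewrite -E Ez eqxx.
  apply: (ww_step (e1 := (l, x)) (e2 := (l, y))).
  + by rewrite xpair_eqE eqxx (negbTE (i_xy inv)).
  + by apply: Hmem; rewrite eqxx.
  + by apply: Hmem; rewrite eqxx orbT.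
  + by apply: ww0; apply: (final_pm (w := y) inv EUL); rewrite !eqxx.
  + by apply: ww0; apply: (final_pm (w := x) inv EUL); rewrite !eqxx orbT.
- have : 0 < #|UR| by rewrite cUR.
  case/card_gt0P => r rUR.
  have : 0 < #|UL| by rewrite (i_card inv).
  case/card_gt0P => l1 l1UL.
  have : 0 < #|UL :\ l1|.
    by have := i_card inv; rewrite (cardsD1 l1) l1UL cUR add1n => -[->].
  case/card_gt0P => l2; rewrite !inE => /andP[l21 l2UL].
  have allowed : forall l, l \in UL -> (l, r) \in Kminus_edges i0 j0.
    move=> l lUL; rewrite /Kminus_edges inE xpair_eqE.
    case/orP: H6 => [Hi|/and3P[Hj _ _]].
      by apply: contraNN Hi => /andP[/eqP <- _].
    by apply: contraNN Hj => /andP[_ /eqP <-].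
  have H6' : forall l, (i0 \notin UL :\ l) ||
      [&& j0 \notin UR :\ r, j0 != x & j0 != y].
    move=> l; case/orP: H6 => [Hi|/and3P[Hj jx jy]].
      by rewrite !inE negb_and (negbTE Hi) orbT.
    by apply/orP; right; rewrite !inE negb_and (negbTE Hj) orbT jx jy.
  have cUR' : #|UR :\ r| = n.
    by move: cUR; rewrite (cardsD1 r) rUR add1n => -[].
  apply: (ww_step (e1 := (l1, r)) (e2 := (l2, r))).
  + by rewrite xpair_eqE eqxx andbT eq_sym.
  + by rewrite in_setD allowed // andbT (i_free inv l1UL) // rUR.
  + by rewrite in_setD allowed // andbT (i_free inv l2UL) // rUR.
  + exact: IH cUR' (step_right inv l1UL l2UL rUR) (H6' l1).
  + exact: IH cUR' (step_right inv l2UL l1UL rUR) (H6' l2).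
Qed.

Lemma start t (i0 j0 a x y : 'I_t) n (UL UR : {set 'I_t})
    (R B : {set 'I_t * 'I_t}) :
  #|UR| = n.+2 -> inv0 a x y UL UR R B -> waiter_wins i0 j0 n.+3 R B.
Proof.
move=> cUR inv.
have cUR' : forall r, r \in UR -> #|UR :\ r| = n.+1.
  by move=> r rUR; move: cUR; rewrite (cardsD1 r) rUR add1n => -[].
case H6: ((i0 \notin UL) || [&& j0 \notin UR, j0 != x & j0 != y]).
  exact: main cUR inv H6.
move/negbT: H6; rewrite negb_or negbK => /andP[i0UL].
rewrite !negb_and !negbK => Hj.
case/orP: Hj => [j0UR|Hjxy].
- have cUL : #|UL :\ i0| = n.+2.
    by have := i_card inv; rewrite (cardsD1 i0) i0UL cUR add1n => -[].
  have : 0 < #|UL :\ i0| by rewrite cUL.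
  case/card_gt0P => l1; rewrite !inE => /andP[l1i0 l1UL].
  have : 0 < #|UL :\ i0 :\ l1|.
    by move: cUL; rewrite (cardsD1 l1) !inE l1i0 l1UL add1n => -[->].
  case/card_gt0P => l2; rewrite !inE => /and3P[l21 l2i0 l2UL].
  have allowed : forall l, l != i0 -> (l, j0) \in Kminus_edges i0 j0.
    by move=> l li0; rewrite /Kminus_edges inE xpair_eqE (negbTE li0).
  have jx : j0 != x by apply: contraNneq (i_xUR inv) => <-.
  have jy : j0 != y by apply: contraNneq (i_yUR inv) => <-.
  have H6' : forall l, (i0 \notin UL :\ l) ||
      [&& j0 \notin UR :\ j0, j0 != x & j0 != y].
    by move=> l; apply/orP; right; rewrite !inE eqxx jx jy.
  apply: (ww_step (e1 := (l1, j0)) (e2 := (l2, j0))).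
  + by rewrite xpair_eqE eqxx andbT eq_sym.
  + by rewrite in_setD allowed // andbT (i_free inv l1UL) // j0UR.
  + by rewrite in_setD allowed // andbT (i_free inv l2UL) // j0UR.
  + exact: main (cUR' _ j0UR) (step_right inv l1UL l2UL j0UR) (H6' l1).
  + exact: main (cUR' _ j0UR) (step_right inv l2UL l1UL j0UR) (H6' l2).
- have : 0 < #|UR| by rewrite cUR.
  case/card_gt0P => r1 r1UR.
  have : 0 < #|UR :\ r1| by rewrite cUR'.
  case/card_gt0P => r2; rewrite !inE => /andP[r21 r2UR].
  have allowed : forall r, r \in UR -> (i0, r) \in Kminus_edges i0 j0.
    move=> r rUR; rewrite /Kminus_edges inE xpair_eqE eqxx /=.
    apply/eqP => E; case/orP: Hjxy => /eqP Ej.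
      by move: (i_xUR inv); rewrite -Ej -E rUR.
    by move: (i_yUR inv); rewrite -Ej -E rUR.
  have H6' : (i0 \notin UL :\ i0) ||
      [&& j0 \notin UR :\ r1, j0 != x & j0 != y].
    by rewrite !inE eqxx.
  have i0UL' := i0UL.
  apply: (ww_step (e1 := (i0, r1)) (e2 := (i0, r2))).
  + by rewrite xpair_eqE eqxx eq_sym.
  + by rewrite in_setD allowed // andbT (i_free inv i0UL) // r1UR.
  + by rewrite in_setD allowed // andbT (i_free inv i0UL) // r2UR.
  + exact: main (cUR' _ r1UR) (step_left inv i0UL r1UR r2UR) H6'.
  + have H6'' : (i0 \notin UL :\ i0) ||
      [&& j0 \notin UR :\ r2, j0 != x & j0 != y].
      by rewrite !inE eqxx.
    exact: main (cUR' _ r2UR) (step_left inv i0UL r2UR r1UR) H6''.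
Qed.

Lemma after2 t (i0 j0 a x y : 'I_t.+4) R B : x != y ->
  (forall e, e \in R :|: B -> e.1 = a) -> (a, x) \in R -> (a, y) \in R ->
  waiter_wins i0 j0 t.+3 R B.
Proof.
move=> xy HRB ax ay.
apply: (@start _ i0 j0 a x y t (~: [set a]) (~: [set x; y])).
  have := cardsC [set x; y]; rewrite cards2 xy card_ord.
  by rewrite add2n => -[].
split => //.
- have := cardsC [set x; y]; rewrite cards2 xy card_ord add2n => -[->].
  by rewrite cardsC1 card_ord.
- by rewrite !inE eqxx.
- by rewrite !inE eqxx.
- by rewrite !inE eqxx orbT.
- exists id; split.
    by move=> i; rewrite !inE negbK => /eqP ->; rewrite eqxx.
  by move=> i j; rewrite !inE negbK => /eqP ->; rewrite eqxx.
- move=> l r; rewrite in_setC in_set1 => la _; apply/negP => H.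
  by have /= E := HRB _ H; rewrite E eqxx in la.
Qed.

Theorem lemma3p3 (t : nat) (i0 j0 : 'I_t) :
  4 <= t -> waiter_wins i0 j0 t.+1 set0 set0.
Proof.
case: t i0 j0 => [|[|[|[|t]]]] // i0 j0 _.
pose a : 'I_t.+4 := if i0 == ord0 then inord 1 else ord0.
have ai0 : a != i0.
  rewrite /a; case: (eqVneq i0 ord0) => [->|]; last by rewrite eq_sym.
  by apply/eqP => /(congr1 val); rewrite /= inordK.
pose b k : 'I_t.+4 := inord k.
have bv : forall k, k < 4 -> (b k : nat) = k.
  by move=> k k4; rewrite /b inordK // (leq_trans k4).
have bn : forall k l, k < 4 -> l < 4 -> k != l -> (b k == b l) = false.
  move=> k l k4 l4 kl; apply/negbTE; apply: contra kl => /eqP /(congr1 val).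
  by rewrite /= !bv // => ->.
have Hin : forall k R B, (a, b k) \notin R :|: B ->
    (a, b k) \in Kminus_edges i0 j0 :\: (R :|: B).
  move=> k R B H; rewrite in_setD H /Kminus_edges inE xpair_eqE.
  by rewrite (negbTE ai0).
have HRB : forall (p q r s : 'I_t.+4) (e : 'I_t.+4 * 'I_t.+4),
    e \in (a, p) |: ((a, q) |: set0) :|: ((a, r) |: ((a, s) |: set0)) ->
    e.1 = a.
  by move=> p q r s [e1 e2]; rewrite !inE !xpair_eqE;
     case: (eqVneq e1 a).
have R2 : forall p q : nat, p < 2 -> q < 2 -> forall k, 2 <= k < 4 ->
    (a, b k) \notin (a, b p) |: set0 :|: ((a, b q) |: set0).
  move=> p q p2 q2 k /andP[k2 k4]; rewrite !inE !xpair_eqE eqxx /=.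
  rewrite !bn //; [lia|lia|lia|lia].
have fin : forall p q r s : nat, p < 2 -> q < 2 -> 2 <= r < 4 -> 2 <= s < 4 ->
    waiter_wins i0 j0 t.+3 ((a, b r) |: ((a, b p) |: set0))
                           ((a, b s) |: ((a, b q) |: set0)).
  move=> p q r s p2 q2 /andP[r2 r4] /andP[s2 s4].
  apply: (@after2 _ i0 j0 a (b p) (b r)).
  - by rewrite bn //; lia.
  - exact: HRB.
  - by rewrite !inE eqxx orbT.
  - by rewrite !inE eqxx.
apply: (ww_step (e1 := (a, b 0)) (e2 := (a, b 1))).
- by rewrite xpair_eqE eqxx bn.
- by apply: Hin; rewrite !inE.
- by apply: Hin; rewrite !inE.
- apply: (ww_step (e1 := (a, b 2)) (e2 := (a, b 3))).
  + by rewrite xpair_eqE eqxx bn.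
  + by apply: Hin; apply: R2.
  + by apply: Hin; apply: R2.
  + exact: fin.
  + exact: fin.
- apply: (ww_step (e1 := (a, b 2)) (e2 := (a, b 3))).
  + by rewrite xpair_eqE eqxx bn.
  + by apply: Hin; apply: R2.
  + by apply: Hin; apply: R2.
  + exact: fin.
  + exact: fin.
Qed.
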